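(* Consider a discounted MDP with finite state space $\mathcal{S}$, finite action space $\mathcal{A}$, transition matrix $P\in\mathbb{R}_+^{|\mathcal{S}||\mathcal{A}|\times|\mathcal{S}|}$ with $P_{sa,\tilde s}=\Pr(\tilde s\mid s,a)$, initial state distribution $\mu_0$ and discount factor $\gamma\in[0,1)$, and a differentiable parametrized policy $\theta\mapsto\pi_\theta$ with $\theta\in\mathbb{R}^p$. Let $\Upsilon\in\mathbb{R}^{p\times|\mathcal{S}||\mathcal{A}|}$ be the matrix $\Upsilon_{i,sa}=\partial d_\theta(s,a)/\partial\theta_i$. Then $$\Upsilon=H_\theta\,\Delta(\Xi^\top d_{\mathcal{S},\theta})\,\Psi_\theta^{-1},$$ where $\Psi_\theta=I-\gamma P\Pi_\theta$.
   Context: The policy $\pi_\theta\in\mathbb{R}_+^{|\mathcal{S}||\mathcal{A}|}$ has entries $\pi_\theta(s,a)$, normalized in each state. $\Pi_\theta\in\mathbb{R}^{|\mathcal{S}|\times|\mathcal{S}||\mathcal{A}|}$ is block-diagonal with row $s$ containing $\pi_\theta(s,\cdot)^\top$ in the block of state $s$, so $(\Pi_\theta v)(s)=\sum_a\pi_\theta(s,a)v(s,a)$. $d_\theta(s,a)=(1-\gamma)\sum_{i\ge0}\gamma^i\Pr(S_i=s,A_i=a)$ is the discounted state-action visitation distribution with $S_0\sim\mu_0$, actions from $\pi_\theta$ and transitions from $P$; $d_{\mathcal{S},\theta}(s)=\sum_a d_\theta(s,a)$. $H_\theta\in\mathbb{R}^{p\times|\mathcal{S}||\mathcal{A}|}$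 is the actor Jacobian $(H_\theta)_{i,sa}=\partial\pi_\theta(s,a)/\partial\theta_i$. $\Xi\in\mathbb{R}^{|\mathcal{S}|\times|\mathcal{S}||\mathcal{A}|}$ is the marginalization matrix (block-diagonal with blocks $\mathbf{1}_{|\mathcal{A}|}^\top$), so $\Xi^\top d_{\mathcal{S},\theta}$ is the vector with $(s,a)$-entry $d_{\mathcal{S},\theta}(s)$. $\Delta(v)$ is the diagonal matrix with $v$ on its diagonal. *)

(* Defs.v *)
From HB Require Import structures.
From mathcomp Require Import all_boot all_order all_algebra.
From mathcomp Require Import all_classical all_reals all_analysis.
Set Implicit Arguments. Unset Strict Implicit. Unset Printing Implicit Defensive.
Import Order.TTheory GRing.Theory Num.Theory.
Import numFieldNormedType.Exports.
Local Open Scope ring_scope.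

(* Vectors/matrices indexed by
   states (resp. state-action pairs) are MathComp matrices indexed by
   'I_#|S| (resp. 'I_#|{: S * A}|), an index i standing for enum_val i. *)

Section MDP.
Variables (R : realType) (S A : finType).

Notation nS := #|{: S}|.
Notation nSA := #|{: S * A}|.

Definition Pmx (P : S -> A -> S -> R) : 'M[R]_(nSA, nS) :=
  \matrix_(i, j) P (enum_val i).1 (enum_val i).2 (enum_val j).

Definition Pimx (pi : S -> A -> R) : 'M[R]_(nS, nSA) :=
  \matrix_(i, j) (if (enum_val j).1 == enum_val i
                  then pi (enum_val j).1 (enum_val j).2 else 0).

Definition Ximx : 'M[R]_(nS, nSA) :=
  \matrix_(i, j) ((enum_val j).1 == enum_val i)%:R.

Definition Psimx (gamma : R) (P : S -> A -> S -> R) (pi : S -> A -> R)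
  : 'M[R]_nSA := 1%:M - gamma *: (Pmx P *m Pimx pi).

(* Row vector of Pr(S_k = s, A_k = a), with S_0 ~ mu0, A_k ~ pi(S_k, .),
   S_{k+1} ~ P(S_k, A_k, .). *)
Fixpoint occ_row (mu0 : S -> R) (P : S -> A -> S -> R) (pi : S -> A -> R)
  (k : nat) : 'rV[R]_nSA :=
  match k with
  | 0 => \row_j (mu0 (enum_val j).1 * pi (enum_val j).1 (enum_val j).2)
  | k'.+1 => occ_row mu0 P pi k' *m Pmx P *m Pimx pi
  end.

Definition prob_sa (mu0 : S -> R) (P : S -> A -> S -> R) (pi : S -> A -> R)
  (k : nat) (s : S) (a : A) : R :=
  occ_row mu0 P pi k 0 (enum_rank (s, a)).

Definition dvis (gamma : R) (mu0 : S -> R) (P : S -> A -> S -> R)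
  (pi : S -> A -> R) (s : S) (a : A) : R :=
  (1 - gamma) * limn (fun n => \sum_(0 <= k < n) gamma ^+ k * prob_sa mu0 P pi k s a).

Definition dvec gamma mu0 P pi : 'cV[R]_nSA :=
  \col_i dvis gamma mu0 P pi (enum_val i).1 (enum_val i).2.

Definition dSvec gamma mu0 P pi : 'cV[R]_nS :=
  \col_i \sum_(a : A) dvis gamma mu0 P pi (enum_val i) a.

Definition Delta n (v : 'cV[R]_n) : 'M[R]_n := diag_mx v^T.

Definition Hmx p (pol : 'rV[R]_p -> S -> A -> R) (th : 'rV[R]_p)
  : 'M[R]_(p, nSA) :=
  \matrix_(i, j) 'D_(delta_mx 0 i)
     (fun t : 'rV[R]_p => pol t (enum_val j).1 (enum_val j).2) th.

Definition Upsmx p gamma mu0 P (pol : 'rV[R]_p -> S -> A -> R) (th : 'rV[R]_p)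
  : 'M[R]_(p, nSA) :=
  \matrix_(i, j) 'D_(delta_mx 0 i)
     (fun t : 'rV[R]_p => dvis gamma mu0 P (pol t) (enum_val j).1 (enum_val j).2) th.

End MDP.

(* Main.v *)
Require Import Defs.
From HB Require Import structures.
From mathcomp Require Import all_boot all_order all_algebra.
From mathcomp Require Import all_classical all_reals all_analysis.
From mathcomp Require Import lra.
Import Order.TTheory GRing.Theory Num.Theory.
Import numFieldNormedType.Exports.
Set Implicit Arguments. Unset Strict Implicit. Unset Printing Implicit Defensive.
Local Open Scope classical_set_scope.
Local Open Scope ring_scope.
Section Lin.
Variable R : realType.

Definition n1 n (x : 'rV[R]_n) : R := \sum_j `|x 0 j|.

Lemma n1_ge0 n (x : 'rV[R]_n) : 0 <= n1 x.
Proof. by apply: sumr_ge0 => j _. Qed.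

Lemma n1D n (x y : 'rV[R]_n) : n1 (x + y) <= n1 x + n1 y.
Proof.
rewrite /n1 -big_split /=; apply: ler_sum => j _; rewrite mxE; exact: ler_normD.
Qed.

Lemma n1Z n c (x : 'rV[R]_n) : n1 (c *: x) = `|c| * n1 x.
Proof.
rewrite /n1 mulr_sumr; apply: eq_bigr => j _; by rewrite mxE normrM.
Qed.

Lemma n1N n (x : 'rV[R]_n) : n1 (- x) = n1 x.
Proof. by rewrite /n1; apply: eq_bigr => j _; rewrite mxE normrN. Qed.

Lemma le_n1 n (x : 'rV[R]_n) j : `|x 0 j| <= n1 x.
Proof.
rewrite /n1 (bigD1 j) //= lerDl; by apply: sumr_ge0.
Qed.

Definition stoch n (M : 'M[R]_n) :=
  (forall i j, 0 <= M i j) /\ (forall i, \sum_j M i j = 1).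

Lemma n1_stoch n (x : 'rV[R]_n) M : stoch M -> n1 (x *m M) <= n1 x.
Proof.
move=> [M0 M1]; rewrite /n1.
apply: (@le_trans _ _ (\sum_j \sum_i `|x 0 i| * M i j)).
  apply: ler_sum => j _; rewrite mxE.
  apply: (le_trans (ler_norm_sum _ _ _)); apply: ler_sum => i _.
  by rewrite normrM (ger0_norm (M0 _ _)).
rewrite exchange_big /=; apply: ler_sum => i _.
by rewrite -mulr_sumr M1 mulr1.
Qed.

Lemma n1_Psi n g (M : 'M[R]_n) x : 0 <= g -> stoch M ->
  (1 - g) * n1 x <= n1 (x *m (1%:M - g *: M)).
Proof.
move=> g0 sM.
have -> : x *m (1%:M - g *: M) = x - g *: (x *m M).
  by rewrite mulmxBr mulmx1 -scalemxAr.
have h1 : n1 x <= n1 (x - g *: (x *m M)) + n1 (g *: (x *m M)).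
  by have := n1D (x - g *: (x *m M)) (g *: (x *m M)); rewrite subrK.
rewrite n1Z ger0_norm // in h1.
have h2 := n1_stoch x sM.
have : g * n1 (x *m M) <= g * n1 x by apply: ler_wpM2l.
lra.
Qed.

Lemma n1_eq0 n (x : 'rV[R]_n) : n1 x <= 0 -> x = 0.
Proof.
move=> h; apply/rowP => j; rewrite mxE; apply/normr0_eq0.
by apply/le_anti; rewrite normr_ge0 andbT; apply: le_trans (le_n1 x j) h.
Qed.

Lemma unit_Psi n g (M : 'M[R]_n) : 0 <= g -> g < 1 -> stoch M ->
  (1%:M - g *: M) \in unitmx.
Proof.
move=> g0 g1 sM; rewrite -row_free_unit -kermx_eq0; apply/eqP/row_matrixP => i.
rewrite row0; set u := row i _.
have : u *m (1%:M - g *: M) = 0 by apply/sub_kermxP; exact: row_sub.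
move=> h; have := n1_Psi u g0 sM; rewrite h.
have -> : n1 (0 : 'rV[R]_n) = 0 by rewrite /n1 big1 // => j _; rewrite mxE normr0.
move=> h2; apply: n1_eq0.
have := n1_ge0 u; nra.
Qed.

End Lin.
Section MDPalg.
Variables (R : realType) (S A : finType).
Notation nS := #|{: S}|.
Notation nSA := #|{: S * A}|.

Lemma sum_SA (F : S * A -> R) : \sum_(j < nSA) F (enum_val j) = \sum_(x : S * A) F x.
Proof. by rewrite (big_enum_val F). Qed.

Lemma sum_S (F : S -> R) : \sum_(j < nS) F (enum_val j) = \sum_(x : S) F x.
Proof. by rewrite (big_enum_val F). Qed.

Lemma sum_pick (f : 'I_nS -> R) (s : S) :
  \sum_(m < nS) (if s == enum_val m then f m else 0) = f (enum_rank s).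
Proof.
rewrite (bigD1 (enum_rank s)) //= enum_rankK eqxx big1 ?addr0 // => m hm.
case: eqP => // es; move: hm; by rewrite es enum_valK eqxx.
Qed.

Lemma rowsum_Pimx (pi : S -> A -> R) : (forall s, \sum_a pi s a = 1) ->
  forall k, \sum_j Pimx pi k j = 1.
Proof.
move=> h k.
under eq_bigr do rewrite mxE.
rewrite (sum_SA (fun x => if x.1 == enum_val k then pi x.1 x.2 else 0)).
rewrite -(pair_big xpredT xpredT (fun x y => if x == enum_val k then pi x y else 0)) /=.
rewrite (bigD1 (enum_val k)) //= eqxx h big1 ?addr0 // => s /negbTE ->.
by rewrite big1.
Qed.

Lemma stoch_M (P : S -> A -> S -> R) (pi : S -> A -> R) :
  (forall s a s', 0 <= P s a s') -> (forall s a, \sum_(s' : S) P s a s' = 1) ->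
  (forall s a, 0 <= pi s a) -> (forall s, \sum_a pi s a = 1) ->
  stoch (Pmx P *m Pimx pi).
Proof.
move=> P0 P1 p0 p1; split.
  move=> i j; rewrite mxE; apply: sumr_ge0 => k _; rewrite !mxE.
  by apply: mulr_ge0 => //; case: ifP.
move=> i; under eq_bigr do rewrite mxE.
rewrite exchange_big /=.
under eq_bigr do rewrite -mulr_sumr rowsum_Pimx // mulr1 mxE.
by rewrite (sum_S (fun x => P (enum_val i).1 (enum_val i).2 x)) P1.
Qed.

Definition murow (mu0 : S -> R) : 'rV[R]_nS := \row_i mu0 (enum_val i).

Lemma occ0E mu0 (P : S -> A -> S -> R) pi :
  occ_row mu0 P pi 0 = murow mu0 *m Pimx pi.
Proof.
apply/rowP => j; rewrite !mxE.
under eq_bigr do rewrite !mxE.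
rewrite (eq_bigr (fun m => if (enum_val j).1 == enum_val m then
   mu0 (enum_val j).1 * pi (enum_val j).1 (enum_val j).2 else 0)).
  by rewrite sum_pick.
by move=> m _; case: eqP => [->|]; rewrite ?mulr0.
Qed.

End MDPalg.
Section Closed.
Variables (R : realType) (S A : finType).
Notation nS := #|{: S}|.
Notation nSA := #|{: S * A}|.

Lemma cvg_to0_bound {T} {F : set_system T} {FF : Filter F} (f g : T -> R) :
  (forall x, `|f x| <= g x) -> g @ F --> 0 -> f @ F --> 0.
Proof.
move=> hb hg; apply: (@squeeze_cvgr _ _ _ _ (fun x => - g x) g).
  by apply: nearW => x; have := hb x; rewrite ler_norml.
  by rewrite -oppr0; apply: cvgN.
exact: hg.
Qed.

Lemma dvis_closed (gamma : R) mu0 (P : S -> A -> S -> R) (pi : S -> A -> R) s a :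
  (forall s a s', 0 <= P s a s') -> (forall s a, \sum_(s' : S) P s a s' = 1) ->
  (forall s a, 0 <= pi s a) -> (forall s, \sum_a pi s a = 1) ->
  0 <= gamma -> gamma < 1 ->
  dvis gamma mu0 P pi s a =
  ((1 - gamma) *: (occ_row mu0 P pi 0 *m invmx (Psimx gamma P pi))) 0 (enum_rank (s, a)).
Proof.
move=> P0 P1 p0 p1 g0 g1.
have sM := stoch_M P0 P1 p0 p1.
set M := Pmx P *m Pimx pi in sM.
have uPsi : Psimx gamma P pi \in unitmx by apply: unit_Psi.
set Psi := Psimx gamma P pi in uPsi *.
set occ := occ_row mu0 P pi.
have occS k : occ k.+1 = occ k *m M by rewrite /occ /= mulmxA.
have occB k : n1 (occ k) <= n1 (occ 0).
  elim: k => // k ih; rewrite occS; exact: le_trans (n1_stoch _ sM) ih.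
set T := fun n => \sum_(0 <= k < n) gamma ^+ k *: occ k.
have TE n : T n *m Psi = occ 0 - gamma ^+ n *: occ n.
  elim: n => [|n ih]; first by rewrite /T big_geq // mul0mx expr0 scale1r subrr.
  rewrite /T big_nat_recr //= mulmxDl -/(T n) ih.
  rewrite /Psi /Psimx -/M -scalemxAl mulmxBr mulmx1 occS exprSr -scalerA -scalemxAr.
  by rewrite scalerBr addrA subrK.
have Tinv n : T n = (occ 0 - gamma ^+ n *: occ n) *m invmx Psi.
  by rewrite -TE mulmxK.
set j := enum_rank (s, a).
rewrite /dvis mxE; congr (_ * _).
have ->: (fun n => \sum_(0 <= k < n) gamma ^+ k * prob_sa mu0 P pi k s a)
   = (fun n => (occ 0 *m invmx Psi) 0 j - gamma ^+ n * (occ n *m invmx Psi) 0 j).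
  apply: funext => n.
  have -> : \sum_(0 <= k < n) gamma ^+ k * prob_sa mu0 P pi k s a = T n 0 j.
    by rewrite /T summxE; apply: eq_bigr => k _; rewrite mxE.
  rewrite Tinv mulmxBl -scalemxAl mxE; congr (_ + _); rewrite mxE; congr (- _); by rewrite mxE.
apply: cvg_lim => //.
rewrite -[X in _ --> X]subr0; apply: cvgB; first exact: cvg_cst.
apply: (@cvg_to0_bound _ _ _ _ (fun n => gamma ^+ n * (n1 (occ 0) / (1 - gamma)))).
  move=> n; rewrite normrM ger0_norm ?exprn_ge0 //; apply: ler_wpM2l; first exact: exprn_ge0.
  apply: le_trans (le_n1 _ _) _.
  rewrite ler_pdivlMr ?subr_gt0 // mulrC.
  apply: le_trans (n1_Psi _ g0 sM) _.
  rewrite -/(Psimx gamma P pi) -/Psi mulmxKV //; exact: occB.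
rewrite -(mul0r (n1 (occ 0) / (1 - gamma))); apply: cvgMr_tmp.
by apply: cvg_expr; rewrite ger0_norm.
Qed.

End Closed.
Section Key.
Variable R : realType.

Lemma cvg_sumR {T} {F : set_system T} {FF : Filter F} (I : finType)
  (f : I -> T -> R) (l : I -> R) :
  (forall i, f i @ F --> l i) -> (fun x => \sum_i f i x) @ F --> \sum_i l i.
Proof.
move=> h.
have := @cvg_big R I +%R 0 (fun _ => true) add_continuous T F (index_enum I) f l FF (fun i _ => h i).
by [].
Qed.

Lemma key_cvg n {F : set_system R} {FF : Filter F} (c : R)
  (Psi : R -> 'M[R]_n) (Psi0 : 'M[R]_n) (X r : R -> 'rV[R]_n) (r0 q : 'rV[R]_n) :
  0 < c -> (forall h x, c * n1 x <= n1 (x *m Psi h)) ->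
  (forall h, X h *m Psi h = r h) ->
  (forall k l, (fun h => Psi h k l) @ F --> Psi0 k l) ->
  (forall k, (fun h => r h 0 k) @ F --> r0 0 k) ->
  q *m Psi0 = r0 ->
  forall j, (fun h => X h 0 j) @ F --> q 0 j.
Proof.
move=> c0 hc hX hPsi hr hq j.
have E k : (fun h => ((X h - q) *m Psi h) 0 k) @ F --> 0.
  have -> : (fun h => ((X h - q) *m Psi h) 0 k) =
     (fun h => r h 0 k - \sum_l q 0 l * Psi h l k).
    by apply: funext => h; rewrite mulmxBl hX mxE; congr (_ + _); rewrite mxE mxE.
  have e0 : r0 0 k - \sum_l q 0 l * Psi0 l k = 0.
    by rewrite -hq mxE subrr.
  rewrite -[X in _ --> X]e0.
  have h2 : (fun h => \sum_l q 0 l * Psi h l k) @ F --> \sum_l q 0 l * Psi0 l k.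
    apply: cvg_sumR => l; apply: cvgMl_tmp; exact: hPsi.
  exact: (cvgB (hr k) h2).
have N : (fun h => n1 ((X h - q) *m Psi h) / c) @ F --> 0.
  rewrite -(mul0r c^-1); apply: cvgMr_tmp.
  have e1 : \sum_(k < n) (0:R) = 0 by rewrite big1.
  rewrite /n1 -[X in _ --> X]e1.
  apply: cvg_sumR => k; rewrite -(@normr0 _ R); apply: cvg_norm; exact: E.
have D : (fun h => X h 0 j - q 0 j) @ F --> 0.
  apply: cvg_to0_bound N => h.
  rewrite ler_pdivlMr // mulrC; apply: le_trans (hc h _).
  apply: ler_wpM2l; first exact: ltW.
  by have := le_n1 (X h - q) j; rewrite !mxE.
have -> : q 0 j = 0 + q 0 j by rewrite add0r.
have -> : (fun h => X h 0 j) = (fun h => (X h 0 j - q 0 j) + q 0 j).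
  by apply: funext => h; rewrite subrK.
exact: (cvgD D (cvg_cst (q 0 j))).
Qed.

End Key.
Section Deriv.
Variable R : realType.

Lemma alg_id m n (D0 Dh : 'rV[R]_m) (mu : 'rV[R]_n) (Pm : 'M[R]_(m,n))
  (P0 Ph : 'M[R]_(n,m)) (g c : R) :
  Dh *m (1%:M - g *: (Pm *m Ph)) = c *: (mu *m Ph) ->
  D0 *m (1%:M - g *: (Pm *m P0)) = c *: (mu *m P0) ->
  (Dh - D0) *m (1%:M - g *: (Pm *m Ph)) = (c *: mu + g *: (D0 *m Pm)) *m (Ph - P0).
Proof.
move=> h1 h2.
have eD0 : D0 = c *: (mu *m P0) + g *: (D0 *m Pm *m P0).
  by rewrite -h2 mulmxBr mulmx1 -scalemxAr mulmxA subrK.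
rewrite mulmxBl h1 mulmxBr mulmx1 -[D0 *m (g *: _)]scalemxAr mulmxA.
rewrite mulmxBr !mulmxDl -!scalemxAl -eD0.
by rewrite opprB addrA.
Qed.

Lemma cvg_id0 : (fun h : R => h) @ 0^' --> (0 : R).
Proof. exact: cvg_trans (cvg_within _) cvg_id. Qed.

Lemma cont_along p (f : 'rV[R]_p -> R) th v : derivable f th v ->
  (fun h : R => f (h *: v + th)) @ 0^' --> f th.
Proof.
move=> df.
have Hd : (fun h : R => h^-1 *: ((f \o shift th) (h *: v) - f th)) @ 0^' --> 'D_v f th.
  exact: df.
have -> : (fun h : R => f (h *: v + th)) =
   (fun h => f th + h * (h^-1 *: ((f \o shift th) (h *: v) - f th))).
  apply: funext => h /=; have [->|h0] := eqVneq h 0.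
    by rewrite scale0r add0r mul0r addr0.
  have -> : forall y : R, h^-1 *: y = h^-1 * y by [].
  by rewrite mulrA mulfV // mul1r [f th + _]addrC subrK.
have H2 : (fun h : R => h * (h^-1 *: ((f \o shift th) (h *: v) - f th))) @ 0^'
   --> 0 * 'D_v f th := cvgM cvg_id0 Hd.
rewrite mul0r in H2.
have H3 := cvgD (cvg_cst (f th)) (H2 (dnbhs_filter _)).
rewrite addr0 in H3. exact: H3.
Qed.

End Deriv.
Section Main.
Variables (R : realType) (S A : finType).
Notation nS := #|{: S}|.
Notation nSA := #|{: S * A}|.

Definition Dr gamma (mu0 : S -> R) P (pi : S -> A -> R) : 'rV[R]_nSA :=
  (1 - gamma) *: (occ_row mu0 P pi 0 *m invmx (Psimx gamma P pi)).

Lemma PsiE gamma (P : S -> A -> S -> R) pi k l :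
  Psimx gamma P pi k l = (1%:M : 'M[R]_nSA) k l - gamma * \sum_m Pmx P k m * Pimx pi m l.
Proof. by rewrite /Psimx [LHS]mxE [X in _ + X]mxE [X in - X]mxE [X in _ * X]mxE. Qed.

End Main.
Section Main2.
Variables (R : realType) (S A : finType).
Notation nS := #|{: S}|.
Notation nSA := #|{: S * A}|.

Definition Pid p (pol : 'rV[R]_p -> S -> A -> R) th v : 'M[R]_(nS, nSA) :=
  \matrix_(k, l) (if (enum_val l).1 == enum_val k then
     'D_v (fun t => pol t (enum_val l).1 (enum_val l).2) th else 0).

Definition wv gamma mu0 (P : S -> A -> S -> R) pi : 'rV[R]_nS :=
  (1 - gamma) *: murow mu0 + gamma *: (Dr gamma mu0 P pi *m Pmx P).

Lemma cvgMl0 (g : R -> R) a b : g @ (0:R)^' --> b -> (fun x => a * g x) @ (0:R)^' --> a * b.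
Proof. move=> h. exact: cvgMl_tmp. Qed.
Lemma cvgB0 (f g : R -> R) a b : f @ (0:R)^' --> a -> g @ (0:R)^' --> b -> (fun x => f x - g x) @ (0:R)^' --> a - b.
Proof. move=> h1 h2. exact: cvgB. Qed.

Lemma scaleB_entry m n (c : R) (M1 M2 : 'M[R]_(m, n)) i j :
  (c *: (M1 - M2)) i j = c * (M1 i j - M2 i j).
Proof. by rewrite !mxE. Qed.

Lemma Dr_Psi gamma mu0 (P : S -> A -> S -> R) (pi : S -> A -> R) :
  (forall s a s', 0 <= P s a s') -> (forall s a, \sum_(s' : S) P s a s' = 1) ->
  (forall s a, 0 <= pi s a) -> (forall s, \sum_a pi s a = 1) ->
  0 <= gamma -> gamma < 1 ->
  Dr gamma mu0 P pi *m Psimx gamma P pi = (1 - gamma) *: (murow mu0 *m Pimx pi).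
Proof.
move=> P0 P1 p0 p1 g0 g1.
have uPsi : Psimx gamma P pi \in unitmx by apply: unit_Psi => //; exact: stoch_M.
by rewrite /Dr -scalemxAl mulmxKV // occ0E.
Qed.

Lemma deriv_main p gamma mu0 (P : S -> A -> S -> R) (pol : 'rV[R]_p -> S -> A -> R) th v :
  (forall s a s', 0 <= P s a s') -> (forall s a, \sum_(s' : S) P s a s' = 1) ->
  (forall t s a, 0 <= pol t s a) -> (forall t s, \sum_a pol t s a = 1) ->
  0 <= gamma -> gamma < 1 ->
  (forall s a, derivable (fun t => pol t s a) th v) ->
  forall j,
  (fun h : R => h^-1 *: (((fun t => Dr gamma mu0 P (pol t) 0 j) \o shift th) (h *: v)
       - Dr gamma mu0 P (pol th) 0 j)) @ 0^' -->
  ((wv gamma mu0 P (pol th) *m Pid pol th v) *m invmx (Psimx gamma P (pol th))) 0 j.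
Proof.
move=> P0 P1 p0 p1 g0 g1 dp j.
have uPsi0 : Psimx gamma P (pol th) \in unitmx by apply: unit_Psi => //; exact: stoch_M.
set X := fun h : R => h^-1 *: (Dr gamma mu0 P (pol (h *: v + th)) - Dr gamma mu0 P (pol th)).
have -> : (fun h : R => h^-1 *: (((fun t => Dr gamma mu0 P (pol t) 0 j) \o shift th) (h *: v)
       - Dr gamma mu0 P (pol th) 0 j)) = (fun h => X h 0 j).
  apply: funext => h; rewrite /X [RHS]mxE [X in _ * X]mxE [X in _ * (_ + X)]mxE.
  by [].
apply: (@key_cvg R nSA 0^' (dnbhs_filter _) (1 - gamma)
   (fun h => Psimx gamma P (pol (h *: v + th))) (Psimx gamma P (pol th)) X
   (fun h => wv gamma mu0 P (pol th) *m (h^-1 *: (Pimx (pol (h *: v + th)) - Pimx (pol th))))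
   (wv gamma mu0 P (pol th) *m Pid pol th v)).
- by rewrite subr_gt0.
- move=> h x; apply: n1_Psi => //; exact: stoch_M.
- move=> h; rewrite /X -scalemxAl -scalemxAr; congr (_ *: _).
  apply: alg_id; rewrite -/(Psimx _ _ _); exact: Dr_Psi.
- move=> k l.
  have -> : (fun h => Psimx gamma P (pol (h *: v + th)) k l) =
    (fun h => (1%:M : 'M[R]_nSA) k l - gamma * \sum_m Pmx P k m * Pimx (pol (h *: v + th)) m l).
    by apply: funext => h; rewrite PsiE.
  rewrite PsiE.
  have Hm : forall m, (fun h => Pimx (pol (h *: v + th)) m l) @ 0^' --> Pimx (pol th) m l.
    move=> m.
    have -> : (fun h => Pimx (pol (h *: v + th)) m l) = (fun h =>
       if (enum_val l).1 == enum_val m then pol (h *: v + th) (enum_val l).1 (enum_val l).2 else 0).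
      by apply: funext => h; rewrite mxE.
    rewrite mxE; case: ifP => _; [exact: (cont_along (dp _ _)) | exact: cvg_cst].
  have Hs : (fun h => \sum_m Pmx P k m * Pimx (pol (h *: v + th)) m l) @ 0^'
      --> \sum_m Pmx P k m * Pimx (pol th) m l.
    by apply: cvg_sumR => m; apply: cvgMl0.
  by apply: cvgB0; [exact: cvg_cst | apply: cvgMl0].
- move=> k; rewrite [X in _ --> X]mxE.
  have -> : (fun h => (wv gamma mu0 P (pol th) *m (h^-1 *: (Pimx (pol (h *: v + th)) - Pimx (pol th)))) 0 k)
    = (fun h => \sum_m wv gamma mu0 P (pol th) 0 m *
         (h^-1 * (Pimx (pol (h *: v + th)) m k - Pimx (pol th) m k))).
    by apply: funext => h; rewrite mxE; apply: eq_bigr => m _; rewrite scaleB_entry.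
  have Hm' : forall m, (fun h => h^-1 * (Pimx (pol (h *: v + th)) m k - Pimx (pol th) m k))
      @ 0^' --> Pid pol th v m k.
    move=> m; rewrite /Pid [X in _ --> X]mxE.
    under eq_cvg do rewrite !mxE.
    case: ifP => _.
      exact: dp.
    have -> : (fun h : R => h^-1 * (0 - 0)) = (fun _ => 0) by apply: funext => h; rewrite subrr mulr0.
    exact: cvg_cst.
  by apply: cvg_sumR => m; apply: cvgMl0; exact: Hm'.
- by rewrite mulmxKV.
Qed.

End Main2.
Section Final.
Variables (R : realType) (S A : finType).
Notation nS := #|{: S}|.
Notation nSA := #|{: S * A}|.

Lemma sum_pick_mul (w : 'I_nS -> R) (s : S) (d : R) :
  \sum_m w m * (if s == enum_val m then d else 0) = w (enum_rank s) * d.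
Proof.
rewrite -(sum_pick (fun m => w m * d)); apply: eq_bigr => m _.
by case: ifP; rewrite ?mulr0.
Qed.

Lemma wv_sum gamma mu0 (P : S -> A -> S -> R) (pi : S -> A -> R) :
  (forall s a s', 0 <= P s a s') -> (forall s a, \sum_(s' : S) P s a s' = 1) ->
  (forall s a, 0 <= pi s a) -> (forall s, \sum_a pi s a = 1) ->
  0 <= gamma -> gamma < 1 ->
  forall s, \sum_a dvis gamma mu0 P pi s a = wv gamma mu0 P pi 0 (enum_rank s).
Proof.
move=> P0 P1 p0 p1 g0 g1 s.
have hD := Dr_Psi mu0 P0 P1 p0 p1 g0 g1.
have eD : Dr gamma mu0 P pi = wv gamma mu0 P pi *m Pimx pi.
  rewrite /wv; set D := Dr gamma mu0 P pi in hD *.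
  move: hD; rewrite /Psimx mulmxBr mulmx1 -scalemxAr => hD.
  have eD : D = (1 - gamma) *: (murow mu0 *m Pimx pi) + gamma *: (D *m (Pmx P *m Pimx pi)).
    by rewrite -hD subrK.
  by rewrite {1}eD mulmxDl -!scalemxAl mulmxA.
under eq_bigr do rewrite (dvis_closed _ _ _ P0 P1 p0 p1 g0 g1) -/(Dr _ _ _ _) eD mxE.
rewrite -[RHS]mulr1 -(p1 s) mulr_sumr; apply: eq_bigr => a _.
rewrite -sum_pick_mul; apply: eq_bigr => m _; by rewrite [Pimx _ _ _]mxE enum_rankK.
Qed.

End Final.
Unset Implicit Arguments.

Theorem theorem2 (R : realType) (S A : finType) (p : nat)
  (P : S -> A -> S -> R) (mu0 : S -> R) (gamma : R)
  (pol : 'rV[R]_p -> S -> A -> R) (th : 'rV[R]_p) :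
  (forall s a s', 0 <= P s a s') ->
  (forall s a, \sum_(s' : S) P s a s' = 1) ->
  (forall s, 0 <= mu0 s) ->
  \sum_(s : S) mu0 s = 1 ->
  0 <= gamma -> gamma < 1 ->
  (forall t s a, 0 <= pol t s a) ->
  (forall t s, \sum_(a : A) pol t s a = 1) ->
  (forall t s a, differentiable (fun t' : 'rV[R]_p => pol t' s a) t) ->
  Psimx gamma P (pol th) \in unitmx /\
  (forall (i : 'I_p) s a,
     derivable (fun t : 'rV[R]_p => dvis gamma mu0 P (pol t) s a) th (delta_mx 0 i)) /\
  Upsmx gamma mu0 P pol th =
    Hmx pol th
    *m Delta ((Ximx R S A)^T *m dSvec gamma mu0 P (pol th))
    *m invmx (Psimx gamma P (pol th)).
Proof.
move=> P0 P1 m0 m1 g0 g1 p0 p1 dpol.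
have uPsi : Psimx gamma P (pol th) \in unitmx.
  by apply: unit_Psi => //; exact: stoch_M.
have dfun : forall s a, (fun t => dvis gamma mu0 P (pol t) s a) =
    (fun t => Dr gamma mu0 P (pol t) 0 (enum_rank (s, a))).
  by move=> s a; apply: funext => t; rewrite (dvis_closed _ _ _ P0 P1).
have dp : forall v s a, derivable (fun t => pol t s a) th v.
  by move=> v s a; apply: diff_derivable.
have HD : forall v j,
  (fun h : R => h^-1 *: (((fun t => Dr gamma mu0 P (pol t) 0 j) \o shift th) (h *: v)
       - Dr gamma mu0 P (pol th) 0 j)) @ 0^' -->
  ((wv gamma mu0 P (pol th) *m Pid pol th v) *m invmx (Psimx gamma P (pol th))) 0 j.
  by move=> v j; apply: deriv_main.
split => //; split.
  move=> i s a; rewrite dfun; exact: (cvgP _ (HD _ _)).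
apply/matrixP => i j; rewrite mxE.
have -> : (fun t => dvis gamma mu0 P (pol t) (enum_val j).1 (enum_val j).2) =
    (fun t => Dr gamma mu0 P (pol t) 0 j).
  by rewrite dfun -surjective_pairing enum_valK.
rewrite /derive (cvg_lim _ (HD _ j)) //.
rewrite [RHS]mxE [LHS]mxE; apply: eq_bigr => k _; congr (_ * _).
rewrite /Delta mul_mx_diag [RHS]mxE [LHS]mxE /Pid.
under eq_bigr do rewrite [X in _ * X]mxE.
rewrite sum_pick_mul mulrC [Hmx _ _ _ _]mxE; congr (_ * _).
rewrite [in RHS]mxE [in RHS]mxE.
under eq_bigr do rewrite !mxE.
rewrite (eq_bigr (fun m => if (enum_val k).1 == enum_val m then
   \sum_a dvis gamma mu0 P (pol th) (enum_val m) a else 0)); last first.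
  by move=> m _; case: eqP; rewrite ?mul1r ?mul0r.
rewrite (sum_pick (fun m => \sum_a dvis gamma mu0 P (pol th) (enum_val m) a)).
by rewrite enum_rankK (wv_sum _ P0 P1).
Qed.
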